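(* In the setting described in the context, let $(x_1,L_1),(x_2,L_2),(x_3,L_3)\in\mathcal E_\varphi$ with $x_1,x_2,x_3$ pairwise distinct and $L_1,L_2,L_3$ pairwise transverse. Then $\beta_n(L_1,L_2,L_3)=n\beta_1(x_1,x_2,x_3)$.
   Context: $V$ real symplectic of dimension $2n$, $\mathcal L(V)$ its Lagrangian Grassmannian, $\Gamma<\mathrm{PU}(1,1)$ a torsion-free cocompact lattice acting on $\mathbb S^1=\partial\mathcal D_{1,1}$, $\rho:\Gamma\to\mathrm{Sp}(V)$ a homomorphism, and $\varphi:\mathbb S^1\to\mathcal L(V)$ a $\rho$-equivariant measurable map such that (i) $\beta_n(\varphi(x),\varphi(y),\varphi(z))=n\beta_1(x,y,z)$ for Lebesgue-a.e. $(x,y,z)$, and (ii) for every $L\in\mathcal L(V)$ the set of $x$ with $\varphi(x)\cap L\neq0$ has Lebesgue measure zero. Here $\beta_n(L_1,L_2,L_3)$ is the signature of $(x_1,x_2,x_3)\mapsto\langle x_1,x_2\rangle+\langle x_2,x_3\rangle+\langle x_3,x_1\rangle$ on $L_1\oplus L_2\oplus L_3$, and $\beta_1(x,y,z)=\pm1$ for pairwise distinct positively/negatively cyclically ordered triples in $\mathbb S^1$, $0$ otherwise. The essential graph $\mathcal E_\varphi\subset\mathbb S^1\times\mathcal L(V)$ is the support of the pushforward of Lebesgue measure under $x\mapsto(x,\varphi(x))$. *)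

(* Defs.v *)
From HB Require Import structures.
From mathcomp Require Import all_boot all_order all_algebra.
From mathcomp Require Import all_classical all_reals all_analysis.
From mathcomp Require Import complex.

Set Implicit Arguments.
Unset Strict Implicit.
Unset Printing Implicit Defensive.

Import Order.TTheory GRing.Theory Num.Theory.
Local Open Scope ring_scope.
Local Open Scope classical_set_scope.

(* A point of S^1 is  pt t = e^{it}  (t : R, taken modulo 2 pi).        *)

Definition pt (R : realType) (t : R) : R[i] := (cos t +i* sin t)%C.

Definition cdist2 (R : realType) (z w : R[i]) : R :=
  let: Complex a b := (z - w)%R in a ^+ 2 + b ^+ 2.

Definition angmod (R : realType) (t : R) : R :=
  t - 2 * pi * (Num.floor (t / (2 * pi)))%:~R.

(* beta_1 (x,y,z) = +1 / -1 for pairwise distinct positively (counter-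
   clockwise) / negatively cyclically ordered triples, 0 otherwise.    *)
Definition beta1 (R : realType) (t1 t2 t3 : R) : int :=
  if [&& pt t1 != pt t2, pt t2 != pt t3 & pt t1 != pt t3] then
    (if angmod (t2 - t1) < angmod (t3 - t1) then 1 else -1)
  else 0.

(* PU(1,1) = SU(1,1)/{+-1} acting on S^1 by Moebius transformations.   *)
(* A subgroup Gamma < PU(1,1) is represented by its preimage G in       *)
(* SU(1,1) (a subgroup containing -1).                                 *)

Definition Jh (R : realType) : 'M[R[i]]_2 :=
  \matrix_(i < 2, j < 2) (if i == j then (if i == 0 then 1 else -1) else 0).

Definition adjc (R : realType) (g : 'M[R[i]]_2) : 'M[R[i]]_2 :=
  (map_mx (@conjc R) g)^T.

Definition SU11 (R : realType) (g : 'M[R[i]]_2) : Prop :=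
  adjc g *m Jh R *m g = Jh R /\ \det g = 1.

Definition mob (R : realType) (g : 'M[R[i]]_2) (z : R[i]) : R[i] :=
  (g 0 0 * z + g 0 1) / (g 1 0 * z + g 1 1).

Definition cmxdist2 (R : realType) (g h : 'M[R[i]]_2) : R :=
  \sum_(i < 2) \sum_(j < 2) cdist2 (g i j) (h i j).

Definition torsionfree_cocompact_lattice_PU11 (R : realType)
    (G : set 'M[R[i]]_2) : Prop :=
  (forall g, G g -> SU11 g) /\ G 1 /\ G (-1) /\
  (forall g h, G g -> G h -> G (g * h)) /\
  (forall g, G g -> G (invmx g)) /\
  (exists2 e : R, 0 < e & forall g, G g -> cmxdist2 g 1 < e -> g = 1) /\
  (forall g k, G g -> (0 < k)%N -> (g ^+ k = 1 \/ g ^+ k = -1) ->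
               g = 1 \/ g = -1) /\
  (* cocompact: SU(1,1) = G K with K a bounded (relatively compact) set *)
  (exists M : R, forall h, SU11 h ->
     exists g, exists k, [/\ G g, SU11 k, cmxdist2 k 0 <= M & h = g * k]).

Definition symplectic_form (R : realType) (n : nat) (Om : 'M[R]_(n + n)) : Prop :=
  Om^T = - Om /\ Om \in unitmx.

Definition omega (R : realType) (n : nat) (Om : 'M[R]_(n + n))
    (u v : 'rV[R]_(n + n)) : R := (u *m Om *m v^T) 0 0.

(* Sp(V): g acts on row vectors by u |-> u g^T *)
Definition Sp (R : realType) (n : nat) (Om : 'M[R]_(n + n)) (g : 'M[R]_(n + n)) : Prop :=
  g^T *m Om *m g = Om.

(* A Lagrangian L in L(V) is represented by the orthogonal projection P onto
   it (row space of P = L); the topology of L(V) is the one induced by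
   P |-> P (Grassmannian topology). *)
Definition lagproj (R : realType) (n : nat) (Om : 'M[R]_(n + n)) (P : 'M[R]_(n + n)) : Prop :=
  [/\ P^T = P, P *m P = P, \rank P = n & P *m Om *m P^T = 0].

Definition transverse (R : realType) (m : nat) (P Q : 'M[R]_m) : Prop :=
  \rank (P :&: Q)%MS = 0%N.

Definition mxdist (R : realType) (m : nat) (P Q : 'M[R]_m) : R :=
  \sum_(i < m) \sum_(j < m) `|P i j - Q i j|.

Definition posdef_on (R : realType) (N k : nat) (q : 'rV[R]_N -> R)
    (W : 'M[R]_N) (B : 'M[R]_(k, N)) : Prop :=
  [/\ row_free B, (B <= W)%MS &
      forall v : 'rV[R]_k, v != 0 -> 0 < q (v *m B)].

Definition posidx (R : realType) (N : nat) (q : 'rV[R]_N -> R) (W : 'M[R]_N) : nat :=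
  (\max_(k < N.+1 | `[< exists B : 'M[R]_(k, N), posdef_on q W B >]) k)%N.

Definition signature (R : realType) (N : nat) (q : 'rV[R]_N -> R) (W : 'M[R]_N) : int :=
  (posidx q W)%:Z - (posidx (fun v => - q v) W)%:Z.

Definition maslov_form (R : realType) (n : nat) (Om : 'M[R]_(n + n))
    (w : 'rV[R]_((n + n) + ((n + n) + (n + n)))) : R :=
  let x1 := lsubmx w in
  let x2 := lsubmx (rsubmx w) in
  let x3 := rsubmx (rsubmx w) in
  omega Om x1 x2 + omega Om x2 x3 + omega Om x3 x1.

Definition betan (R : realType) (n : nat) (Om : 'M[R]_(n + n))
    (P1 P2 P3 : 'M[R]_(n + n)) : int :=
  signature (maslov_form Om) (block_mx P1 0 0 (block_mx P2 0 0 P3)).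

Definition lam (R : realType) := @lebesgue_measure R.
Arguments lam R : clear implicits.

(* phi : S^1 -> L(V), given as a 2pi-periodic function of the angle *)
Definition measurable_lagmap (R : realType) (m : nat) (phi : R -> 'M[R]_m) : Prop :=
  forall i j, measurable_fun setT (fun t : R => phi t i j).

(* (x, L) belongs to the essential graph of phi, i.e. to the support of
   the push-forward of Lebesgue measure under x |-> (x, phi x) *)
Definition in_essgraph (R : realType) (m : nat) (phi : R -> 'M[R]_m)
    (t0 : R) (P : 'M[R]_m) : Prop :=
  forall e : R, 0 < e ->
    (0 < lam R [set t | (cdist2 (pt t) (pt t0) < e)%R /\ (mxdist (phi t) P < e)%R])%E.

(* Main.v *)
Require Import Defs.
From HB Require Import structures.
From mathcomp Require Import all_boot all_order all_algebra.
From mathcomp Require Import all_classical all_reals all_analysis.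
From mathcomp Require Import complex.
From mathcomp Require Import measurable_realfun.
From mathcomp Require Import ring lra zify.
Import Order.TTheory GRing.Theory Num.Theory numFieldNormedType.Exports.
Local Open Scope ring_scope.
Local Open Scope classical_set_scope.
Set Implicit Arguments.
Unset Strict Implicit.
Unset Printing Implicit Defensive.
Section QF.
Variable R : realType.
Variable N : nat.
Implicit Types (S M : 'M[R]_N) (u v w : 'rV[R]_N).

Definition qf S v := (v *m S *m v^T) 0 0.
Definition bf S u v := (u *m (S + S^T) *m v^T) 0 0.

Lemma trE (m : nat) (u : 'rV[R]_m) (M : 'M[R]_m) (v : 'rV[R]_m) :
  (u *m M *m v^T) 0 0 = (v *m M^T *m u^T) 0 0.
Proof.
transitivity ((u *m M *m v^T)^T 0 0); first by rewrite [RHS]mxE.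
by rewrite !trmx_mul trmxK mulmxA.
Qed.

Lemma bfC S u v : bf S u v = bf S v u.
Proof. by rewrite /bf trE linearD /= trmxK addrC. Qed.

Lemma bfE S u v : bf S u v = (u *m S *m v^T) 0 0 + (v *m S *m u^T) 0 0.
Proof. by rewrite /bf mulmxDr mulmxDl mxE [X in _ + X]trE trmxK. Qed.

Lemma qfD S u v : qf S (u + v) = qf S u + qf S v + bf S u v.
Proof.
rewrite bfE /qf linearD /= !mulmxDl !mulmxDr !mxE; ring.
Qed.

Lemma qfZ S a v : qf S (a *: v) = a ^+ 2 * qf S v.
Proof.
by rewrite /qf linearZ /= -!scalemxAl -scalemxAr !mxE mulrA expr2.
Qed.

Lemma qfN S v : qf S (- v) = qf S v.
Proof. by rewrite -scaleN1r qfZ sqrrN expr1n mul1r. Qed.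

Lemma qf0 S : qf S 0 = 0.
Proof. by rewrite /qf !mul0mx mxE. Qed.

Lemma bfDl S u1 u2 v : bf S (u1 + u2) v = bf S u1 v + bf S u2 v.
Proof. by rewrite /bf !mulmxDl mxE. Qed.

Lemma bfZl S a u v : bf S (a *: u) v = a * bf S u v.
Proof. by rewrite /bf -!scalemxAl mxE. Qed.

Lemma bfNl S u v : bf S (- u) v = - bf S u v.
Proof. by rewrite -scaleN1r bfZl mulN1r. Qed.

Lemma bfDr S u v1 v2 : bf S u (v1 + v2) = bf S u v1 + bf S u v2.
Proof. by rewrite bfC bfDl !(bfC S u). Qed.

Lemma bfZr S a u v : bf S u (a *: v) = a * bf S u v.
Proof. by rewrite bfC bfZl bfC. Qed.

Lemma bfuu S u : bf S u u = 2 * qf S u.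
Proof. by rewrite bfE /qf; ring. Qed.

Lemma qfNS S v : qf (- S) v = - qf S v.
Proof. by rewrite /qf mulmxN mulNmx mxE. Qed.

End QF.
Section Posidx.
Variable R : realType.
Variable N : nat.

Lemma inj_row_free k (A : 'M[R]_(k, N)) :
  (forall v : 'rV_k, v *m A = 0 -> v = 0) -> row_free A.
Proof.
move=> H; rewrite -kermx_eq0; apply/rowV0P => v /sub_kermxP vA; exact: H.
Qed.

Lemma posdef_of (q : 'rV[R]_N -> R) (W : 'M[R]_N) k (B : 'M[R]_(k, N)) :
  q 0 = 0 -> (B <= W)%MS -> (forall v : 'rV_k, v != 0 -> 0 < q (v *m B)) ->
  posdef_on q W B.
Proof.
move=> q0 BW H; split => //; apply: inj_row_free => v vB.
apply/eqP; apply/negP => /negP /H; by rewrite vB q0 ltxx.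
Qed.

Lemma posidx_max (q : 'rV[R]_N -> R) (W : 'M[R]_N) k (B : 'M[R]_(k, N)) :
  posdef_on q W B -> (k <= posidx q W)%N.
Proof.
move=> pB; have kN : (k < N.+1)%N.
  by case: pB => /eqP rB _ _; rewrite ltnS -rB rank_leq_col.
rewrite /posidx.
apply: (@leq_bigmax_cond _ _ (fun i : 'I_N.+1 => nat_of_ord i) (Ordinal kN)).
by apply/asboolP; exists B.
Qed.

Lemma posidx_ex (q : 'rV[R]_N -> R) (W : 'M[R]_N) :
  q 0 = 0 -> exists B : 'M[R]_(posidx q W, N), posdef_on q W B.
Proof.
move=> q0; rewrite /posidx.
set P := (fun k : 'I_N.+1 => `[< exists B : 'M[R]_(k, N), posdef_on q W B >]).
have P0 : P ord0.
  apply/asboolP; exists 0; apply: posdef_of => //; first by rewrite sub0mx.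
  by move=> v; rewrite thinmx0 eqxx.
have : (0 < #|P|)%N by apply/card_gt0P; exists ord0.
move=> /(@eq_bigmax_cond _ _ (fun i : 'I_N.+1 => nat_of_ord i)) [i0 Pi0 ->].
by move: Pi0; rewrite unfold_in => /asboolP.
Qed.

End Posidx.
Section Sylv.
Variable R : realType.
Variable N : nat.
Implicit Types (S W : 'M[R]_N).

Lemma mul_rowcol1 k (v : 'rV[R]_(k + 1)) (P : 'M[R]_(k, N)) (w : 'rV[R]_N) :
  v *m col_mx P w = lsubmx v *m P + (rsubmx v 0 0) *: w.
Proof.
rewrite -{1}(hsubmxK v) mul_row_col; congr (_ + _).
by rewrite {1}[rsubmx v]mx11_scalar mul_scalar_mx.
Qed.

Lemma pos_neg_le S W :
  (posidx (qf S) W + posidx (fun v => - qf S v) W <= \rank W)%N.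
Proof.
have [B1 [fB1 sB1 pB1]] := posidx_ex W (qf0 S).
have n0 : (fun v => - qf S v) 0 = 0 by rewrite /= qf0 oppr0.
have [B2 [fB2 sB2 pB2]] := @posidx_ex _ _ (fun v => - qf S v) W n0.
set p := posidx _ W in B1 fB1 sB1 pB1 *; set m := posidx _ W in B2 fB2 sB2 pB2 *.
have fM : row_free (col_mx B1 B2).
  apply: inj_row_free => v.
  rewrite -{1}(hsubmxK v) mul_row_col => /eqP; rewrite addr_eq0 => /eqP E.
  have E' : qf S (lsubmx v *m B1) = qf S (rsubmx v *m B2) by rewrite E qfN.
  have q2 : qf S (rsubmx v *m B2) <= 0.
    have [->|nz] := eqVneq (rsubmx v) 0; first by rewrite mul0mx qf0.
    by have := pB2 _ nz; rewrite oppr_gt0 => /ltW.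
  have l0 : lsubmx v = 0.
    apply/eqP/negP => /negP nz; have := pB1 _ nz; rewrite E'.
    by rewrite ltNge q2.
  have r0 : rsubmx v = 0.
    apply/eqP/negP => /negP nz; have := pB2 _ nz.
    by rewrite -E' l0 mul0mx qf0 oppr0 ltxx.
  by rewrite -(hsubmxK v) l0 r0 row_mx0.
have : (\rank (col_mx B1 B2) <= \rank W)%N.
  by apply: mxrankS; rewrite col_mx_sub sB1 sB2.
by move: fM; rewrite /row_free => /eqP ->.
Qed.

Definition nondeg S W := forall w : 'rV[R]_N, (w <= W)%MS ->
  (forall w' : 'rV[R]_N, (w' <= W)%MS -> bf S w w' = 0) -> w = 0.

Lemma pos_neg_ge S W : nondeg S W ->
  (\rank W <= posidx (qf S) W + posidx (fun v => - qf S v) W)%N.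
Proof.
move=> nd.
have [P [fP sP pP]] := posidx_ex W (qf0 S).
set p := posidx (qf S) W in P fP sP pP *.
set T := S + S^T.
set C := (W :&: kermx (T *m P^T))%MS.
have F1 : forall w : 'rV[R]_N, (w <= C)%MS -> forall v : 'rV_p, bf S w (v *m P) = 0.
  move=> w; rewrite /C sub_capmx => /andP [_ /sub_kermxP wK] v.
  by rewrite /bf trmx_mul -/T mulmxA -(mulmxA w) wK mul0mx mxE.
have CW : forall w : 'rV[R]_N, (w <= C)%MS -> (w <= W)%MS.
  by move=> w; rewrite /C sub_capmx => /andP [].
have F2 : forall w : 'rV[R]_N, (w <= C)%MS -> qf S w <= 0.
  move=> w wC; rewrite leNgt; apply/negP => qw.
  have : posdef_on (qf S) W (col_mx P w).
    apply: posdef_of; first exact: qf0.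
      by rewrite col_mx_sub sP CW.
    move=> v vnz; rewrite mul_rowcol1 qfD qfZ bfZr bfC (F1 _ wC) mulr0 addr0.
    have [l0|lnz] := eqVneq (lsubmx v) 0.
      rewrite l0 mul0mx qf0 add0r; apply: mulr_gt0 => //.
      rewrite lt_def sqr_ge0 andbT sqrf_eq0; apply/negP => /eqP c0.
      move/negP: vnz; apply; rewrite -(hsubmxK v) l0.
      have -> : rsubmx v = 0 by apply/matrixP => i j; rewrite !ord1 c0 mxE.
      by rewrite row_mx0.
    apply: ltr_wpDr; last exact: pP.
    by apply: mulr_ge0 => //; [exact: sqr_ge0 | exact: ltW].
  by move/posidx_max; rewrite addn1 ltnn.
have F3 : forall w : 'rV[R]_N, (w <= C)%MS -> qf S w = 0 ->
    forall u : 'rV[R]_N, (u <= C)%MS -> bf S w u = 0.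
  move=> w wC qw u uC; apply/eqP/negP => /negP bnz.
  set b := bf S w u; set a := qf S u.
  have a0 : a <= 0 by exact: F2.
  have a1 : 0 < 1 - a by rewrite subr_gt0; apply: (le_lt_trans a0).
  set c := b / (1 - a).
  have : ((w + c *: u)%R <= C)%MS by apply: (addmx_sub wC); apply: scalemx_sub.
  move/F2; rewrite qfD qw add0r qfZ bfZr -/a -/b.
  have -> : c ^+ 2 * a + c * b = b ^+ 2 / (1 - a) ^+ 2.
    rewrite /c; field; by rewrite gt_eqF.
  rewrite leNgt => /negP; apply; apply: divr_gt0.
    by rewrite lt_def sqr_ge0 andbT sqrf_eq0.
  by rewrite exprn_gt0.
set G := P *m T *m P^T.
have Gu : G \in unitmx.
  rewrite -row_free_unit; apply: inj_row_free => v vG.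
  have h : bf S (v *m P) (v *m P) = 0.
    rewrite /bf -/T trmx_mul !mulmxA.
    have -> : v *m P *m T *m P^T = v *m G by rewrite /G !mulmxA.
    by rewrite vG !mul0mx mxE.
  have : qf S (v *m P) = 0.
    by move: h; rewrite bfuu => /eqP; rewrite mulf_eq0 pnatr_eq0 /= => /eqP.
  apply: contra_eq => /pP; by rewrite lt_def => /andP [].
have F4 : forall w : 'rV[R]_N, (w <= C)%MS -> qf S w = 0 -> w = 0.
  move=> w wC qw; apply: nd; first exact: CW.
  move=> x xW.
  set y := x *m T *m P^T *m invmx G.
  have xC : ((x - y *m P)%R <= C)%MS.
    rewrite /C sub_capmx; apply/andP; split.
      by apply: addmx_sub => //; rewrite -mulNmx; apply: submx_trans (submxMl _ _) sP.
    apply/sub_kermxP; rewrite mulmxBl /y -!mulmxA (mulmxA P T) (mulmxA _ _ (P^T)).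
    by rewrite -/G mulVmx // mulmx1 !mulmxA subrr.
  have -> : x = (x - y *m P) + y *m P by rewrite subrK.
  by rewrite bfDr (F3 _ wC qw _ xC) (F1 _ wC) addr0.
have F5 : forall w : 'rV[R]_N, (w <= C)%MS -> w != 0 -> qf S w < 0.
  move=> w wC wnz; rewrite lt_def F2 // andbT; apply/negP => /eqP qw.
  by move/negP: wnz; apply; apply/eqP; apply: F4.
have rC : (\rank W - p <= \rank C)%N.
  have := mxrank_sum_cap W (kermx (T *m P^T)).
  rewrite mxrank_ker.
  have h1 := rank_leq_col (W + kermx (T *m P^T))%MS.
  have h2 := rank_leq_col (T *m P^T).
  rewrite -/C; lia.
have : (\rank C <= posidx (fun v => - qf S v) W)%N.
  apply: (@posidx_max _ _ _ _ _ (row_base C)).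
  apply: posdef_of; first by rewrite qf0 oppr0.
    by rewrite eq_row_base /C capmxSl.
  move=> v vnz; rewrite oppr_gt0; apply: F5.
    by apply: submx_trans (submxMl _ _) _; rewrite eq_row_base.
  apply: contra vnz => /eqP H; apply/eqP.
  by apply: (row_free_inj (row_base_free C)); rewrite H mul0mx.
lia.
Qed.

End Sylv.
Section Bounds.
Variable R : realType.

Definition msum m n (M : 'M[R]_(m, n)) := \sum_i \sum_j `|M i j|.

Lemma msum_ge0 m n (M : 'M[R]_(m, n)) : 0 <= msum M.
Proof. by apply: sumr_ge0 => i _; apply: sumr_ge0. Qed.

Lemma le_sum_term (I : finType) (F : I -> R) j :
  (forall i, 0 <= F i) -> F j <= \sum_i F i.
Proof. by move=> F0; rewrite (bigD1 j) //= lerDl sumr_ge0. Qed.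

Lemma entry_le_norm m n (x : 'M[R]_(m, n)) i j : `|x i j| <= `|x|.
Proof.
have -> : `|x| = mx_norm x by [].
rewrite mx_normrE.
exact: (le_bigmax _ (fun ij : 'I_m * 'I_n => `|x ij.1 ij.2|) (i, j)).
Qed.

Lemma norm_le_entries m n (x : 'M[R]_(m, n)) c :
  0 <= c -> (forall i j, `|x i j| <= c) -> `|x| <= c.
Proof.
move=> c0 H; have -> : `|x| = mx_norm x by [].
by rewrite mx_normrE; apply: bigmax_le => // ij _; apply: H.
Qed.

Lemma norm_mulmx m n (u : 'rV[R]_m) (M : 'M[R]_(m, n)) :
  `|u *m M| <= `|u| * msum M.
Proof.
apply: norm_le_entries; first by apply: mulr_ge0 => //; exact: msum_ge0.
move=> i j; rewrite mxE; apply: le_trans (ler_norm_sum _ _ _) _.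
apply: (@le_trans _ _ (\sum_k `|u| * `|M k j|)).
  apply: ler_sum => k _; rewrite normrM ler_wpM2r //; exact: entry_le_norm.
rewrite -mulr_sumr ler_wpM2l // /msum; apply: ler_sum => k _.
by apply: le_sum_term => i0.
Qed.

Lemma bil_bound m (u : 'rV[R]_m) (M : 'M[R]_m) (w : 'rV[R]_m) :
  `|(u *m M *m w^T) 0 0| <= `|u| * `|w| * msum M.
Proof.
rewrite -mulmxA mxE; apply: le_trans (ler_norm_sum _ _ _) _.
rewrite /msum mulr_sumr; apply: ler_sum => i _.
rewrite normrM -mulrA; apply: ler_pM => //; first exact: entry_le_norm.
rewrite mxE; apply: le_trans (ler_norm_sum _ _ _) _.
rewrite mulr_sumr; apply: ler_sum => j _.
rewrite !mxE normrM [X in _ <= X]mulrC ler_wpM2l //; exact: entry_le_norm.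
Qed.

End Bounds.
Section Cont.
Variable R : realType.

Lemma qf_diff k (M : 'M[R]_k) (v y : 'rV[R]_k) :
  `|qf M v - qf M y| <= `|v - y| * (`|v - y| + `|y|) * (msum M + msum (M + M^T)).
Proof.
have -> : qf M v - qf M y = qf M (v - y) + bf M (v - y) y.
  have E : v = (v - y) + y by rewrite subrK.
  by rewrite [in LHS]E qfD addrAC addrK.
apply: le_trans (ler_normD _ _) _.
have h1 := bil_bound (v - y) M (v - y).
have h2 := bil_bound (v - y) (M + M^T) y.
rewrite /qf /bf.
have a0 := normr_ge0 (v - y); have b0 := normr_ge0 y.
have p0 := msum_ge0 M; have r0 := msum_ge0 (M + M^T).
set a := `|v - y| in h1 h2 a0 *; set b := `|y| in h2 b0 *.
set p := msum M in h1 p0 *; set r := msum (M + M^T) in h2 r0 *.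
apply: le_trans (lerD h1 h2) _.
have : 0 <= a * a * r + a * b * p.
  by apply: addr_ge0; apply: mulr_ge0 => //; apply: mulr_ge0.
move=> h; rewrite -subr_ge0; apply: le_trans h _; rewrite le_eqVlt; apply/orP; left.
apply/eqP; ring.
Qed.

Lemma qf_continuous k (M : 'M[R]_k) : continuous (fun v : 'rV[R]_k => qf M v).
Proof.
move=> v; apply/(@cvgrPdist_lt _ _ _ _ (nbhs_filter v)) => e e0.
set K := msum M + msum (M + M^T).
have K0 : 0 <= K by apply: addr_ge0; exact: msum_ge0.
set d := Num.min 1 (e / ((1 + `|v|) * K + 1)).
have d0 : 0 < d.
  rewrite /d lt_min ltr01 /=; apply: divr_gt0 => //.
  by apply: ltr_wpDl => //; apply: mulr_ge0 => //; apply: addr_ge0.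
have : \forall y \near v, `|v - y| < d.
  by apply: (@cvgr_dist_lt _ _ _ _ (nbhs_filter v) id v) => //; exact: cvg_id.
apply: filterS => y /= hy.
rewrite distrC; apply: le_lt_trans (qf_diff M y v) _.
have hyv : `|y - v| < d by rewrite distrC.
have d1 : d <= 1 by rewrite /d ge_min lexx.
have d2 : d <= e / ((1 + `|v|) * K + 1) by rewrite /d ge_min lexx orbT.
have nv := normr_ge0 v; have nyv := normr_ge0 (y - v).
have step1 : `|y - v| * (`|y - v| + `|v|) * K <= d * (1 + `|v|) * K.
  apply: ler_wpM2r => //; apply: ler_pM.
  - exact: nyv.
  - exact: addr_ge0.
  - exact: ltW.
  - by apply: lerD => //; apply: le_trans (ltW hyv) d1.
apply: le_lt_trans step1 _.
have hK : 0 < (1 + `|v|) * K + 1.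
  by apply: ltr_wpDl => //; apply: mulr_ge0 => //; apply: addr_ge0.
apply: (@le_lt_trans _ _ (e / ((1 + `|v|) * K + 1) * ((1 + `|v|) * K))).
  rewrite -mulrA; apply: ler_wpM2r => //; apply: mulr_ge0 => //; exact: addr_ge0.
rewrite mulrAC ltr_pdivrMr // ltr_pM2l //; lra.
Qed.

Lemma qf_pos_min k (M : 'M[R]_k) :
  (forall v : 'rV_k, v != 0 -> 0 < qf M v) ->
  exists2 c, 0 < c & forall v : 'rV_k, c * `|v| ^+ 2 <= qf M v.
Proof.
move=> pos.
case: k M pos => [|k] M pos.
  exists 1 => // v; rewrite [v]thinmx0 normr0 expr0n /= mulr0 qf0 //.
set K := [set v : 'rV[R]_k.+1 | `|v| = 1].
have K0 : K !=set0.
  exists (const_mx 1); rewrite /K /=; apply/eqP; rewrite eq_le; apply/andP; split.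
    by apply: norm_le_entries => // i j; rewrite mxE normr1.
  by have := entry_le_norm (const_mx 1 : 'rV[R]_k.+1) 0 0; rewrite mxE normr1.
have cK : compact K.
  apply: bounded_closed_compact.
    rewrite /bounded_set /= /bounded_near; near=> x.
    move=> y; rewrite /K /= => ->; near: x; apply: nbhs_pinfty_ge; exact: num_real.
  rewrite /K; apply: (@preimage_closed _ _ (fun v : 'rV[R]_k.+1 => `|v|) [set 1]).
    by move=> x _; exact: norm_continuous.
  exact: closed_eq.
have [v0 v0K minv] := EVT_min_rV K0 cK (continuous_subspaceT (@qf_continuous _ M)).
have v0n : `|v0| = 1 by move: v0K; rewrite inE.
have v0nz : v0 != 0 by apply/negP => /eqP v00; move: v0n; rewrite v00 normr0 => /eqP; rewrite eq_sym oner_eq0.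
exists (qf M v0); first exact: pos.
move=> v; have [->|vnz] := eqVneq v 0; first by rewrite normr0 expr0n /= mulr0 qf0.
have nv0 : 0 < `|v| by rewrite normr_gt0.
have uK : (`|v|^-1 *: v) \in K.
  rewrite inE /K /= normrZ normfV normr_id mulVf //; exact: lt0r_neq0.
have := minv _ uK; rewrite qfZ => h.
have -> : qf M v = `|v| ^+ 2 * (`|v|^-1 ^+ 2 * qf M v).
  by rewrite mulrA -exprMn divff ?expr1n ?mul1r // lt0r_neq0.
rewrite mulrC; apply: ler_wpM2l => //; exact: sqr_ge0.
Unshelve. all: by end_near.
Qed.

End Cont.
Section LSC.
Variable R : realType.
Variable N : nat.

Lemma qf_mulB k (S : 'M[R]_N) (B : 'M[R]_(k, N)) (v : 'rV[R]_k) :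
  qf S (v *m B) = qf (B *m S *m B^T) v.
Proof. by rewrite /qf trmx_mul !mulmxA. Qed.

Lemma posidx_lsc (S W : 'M[R]_N) : W *m W = W ->
  exists2 d : R, 0 < d & forall X : 'M[R]_N, msum (X - W) < d ->
    (posidx (qf S) W <= posidx (qf S) X)%N.
Proof.
move=> WW.
have [B [fB sB pB]] := posidx_ex W (qf0 S).
set k := posidx (qf S) W in B fB sB pB *.
have BW : B *m W = B by case/submxP: sB => D ->; rewrite -mulmxA WW.
have [c c0 hc] : exists2 c, 0 < c & forall v : 'rV_k, c * `|v| ^+ 2 <= qf S (v *m B).
  have hpos : forall v : 'rV_k, v != 0 -> 0 < qf (B *m S *m B^T) v.
    by move=> v vnz; rewrite -qf_mulB; apply: pB.
  have [c c0 hc] := qf_pos_min hpos.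
  by exists c => // v; rewrite qf_mulB.
set be := msum B; set sg := msum S + msum (S + S^T).
have be0 : 0 <= be by exact: msum_ge0.
have sg0 : 0 <= sg by apply: addr_ge0; exact: msum_ge0.
have den0 : 0 < be ^+ 2 * sg + 1.
  by apply: ltr_wpDl => //; apply: mulr_ge0 => //; exact: sqr_ge0.
exists (Num.min 1 (c / (be ^+ 2 * sg + 1))).
  by rewrite lt_min ltr01 /= divr_gt0.
move=> X; rewrite lt_min => /andP [dl1 dlc].
set dl := msum (X - W) in dl1 dlc *.
have dl0 : 0 <= dl by exact: msum_ge0.
apply: posidx_max.
apply: posdef_of; first exact: qf0.
  exact: submxMl.
move=> v vnz.
set u := v *m B; set e := u *m (X - W).
have uW : u *m W = u by rewrite /u -mulmxA BW.
have -> : v *m (B *m X) = u + e by rewrite /e mulmxBr uW addrC subrK mulmxA.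
set a := `|v|.
have a0 : 0 < a by rewrite normr_gt0.
have hu : `|u| <= a * be by exact: norm_mulmx.
have he : `|e| <= `|u| * dl by exact: norm_mulmx.
have u0 := normr_ge0 u; have e0 := normr_ge0 e.
have he1 : `|e| <= a * be * dl.
  by apply: le_trans he _; apply: ler_wpM2r.
have he2 : `|e| <= a * be.
  apply: le_trans he1 _; rewrite -[X in _ <= X]mulr1; apply: ler_wpM2l.
    exact: mulr_ge0 (ltW a0) be0.
  exact: ltW.
have hq : `|qf S e| <= (a * be) * (a * be * dl) * msum S.
  apply: le_trans (bil_bound e S e) _; apply: ler_wpM2r; first exact: msum_ge0.
  by rewrite mulrC; apply: ler_pM.
have hb : `|bf S u e| <= (a * be) * (a * be * dl) * msum (S + S^T).
  apply: le_trans (bil_bound u (S + S^T) e) _; apply: ler_wpM2r; first exact: msum_ge0.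
  by apply: ler_pM.
have hsum : `|qf S e| + `|bf S u e| <= a ^+ 2 * (be ^+ 2 * sg * dl).
  apply: le_trans (lerD hq hb) _; rewrite le_eqVlt; apply/orP; left; apply/eqP.
  rewrite /sg; ring.
have hlt : be ^+ 2 * sg * dl < c.
  have : dl * (be ^+ 2 * sg + 1) < c by rewrite -ltr_pdivlMr.
  apply: le_lt_trans; rewrite mulrC ler_wpM2l //.
  by rewrite lerDl.
have hmain : a ^+ 2 * (be ^+ 2 * sg * dl) < c * a ^+ 2.
  by rewrite mulrC ltr_pM2r // exprn_gt0.
rewrite qfD -addrA.
have h1 := hc v.
have h2 : - (`|qf S e| + `|bf S u e|) <= qf S e + bf S u e.
  rewrite opprD; apply: lerD; rewrite lerNl -normrN; exact: ler_norm.
have : c * a ^+ 2 - a ^+ 2 * (be ^+ 2 * sg * dl) <= qf S u + (qf S e + bf S u e).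
  apply: lerD => //; apply: le_trans h2; rewrite lerN2; exact: hsum.
apply: lt_le_trans; rewrite subr_gt0; exact: hmain.
Qed.

End LSC.
Section LocConst.
Variable R : realType.
Variable N : nat.

Lemma qfN_fun (S : 'M[R]_N) : qf (- S) = (fun v => - qf S v).
Proof. by apply/funext => v; rewrite qfNS. Qed.

Lemma signature_locconst (S W : 'M[R]_N) : W *m W = W -> nondeg S W ->
  exists2 d : R, 0 < d & forall X : 'M[R]_N, msum (X - W) < d ->
    (\rank X <= \rank W)%N -> signature (qf S) X = signature (qf S) W.
Proof.
move=> WW nd.
have [d1 d10 h1] := posidx_lsc S WW.
have [d2 d20 h2] := posidx_lsc (- S) WW.
exists (Num.min d1 d2); first by rewrite lt_min d10 d20.
move=> X; rewrite lt_min => /andP [x1 x2] rX.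
have p1 := h1 _ x1; have p2 := h2 _ x2.
rewrite qfN_fun in p2.
have c1 := pos_neg_le S X.
have c2 := pos_neg_ge nd.
rewrite /signature.
have e1 : posidx (qf S) X = posidx (qf S) W by lia.
have e2 : posidx (fun v => - qf S v) X = posidx (fun v => - qf S v) W by lia.
by rewrite e1 e2.
Qed.

End LocConst.
Section Blocks.
Variable R : realType.

Lemma blk_mul m1 m2 n1 n2 (Dl : 'rV[R]_m1) (Dr : 'rV[R]_m2)
   (A : 'M[R]_(m1, n1)) (B : 'M[R]_(m2, n2)) :
  row_mx Dl Dr *m block_mx A 0 0 B = row_mx (Dl *m A) (Dr *m B).
Proof. by rewrite mul_row_block !mulmx0 addr0 add0r. Qed.

Lemma sub_blkW m1 m2 (w : 'rV[R]_(m1 + m2)) (A : 'M[R]_m1) (B : 'M[R]_m2) :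
  (w <= block_mx A 0 0 B)%MS -> (lsubmx w <= A)%MS /\ (rsubmx w <= B)%MS.
Proof.
case/submxP => D ->; rewrite -(hsubmxK D) blk_mul row_mxKl row_mxKr.
by split; apply: submxMl.
Qed.

Lemma sub_blk m1 m2 (x : 'rV[R]_m1) (y : 'rV[R]_m2) (A : 'M[R]_m1) (B : 'M[R]_m2) :
  (x <= A)%MS -> (y <= B)%MS -> (row_mx x y <= block_mx A 0 0 B)%MS.
Proof.
case/submxP => Dx ->; case/submxP => Dy ->.
by rewrite -blk_mul submxMl.
Qed.

Lemma lsub0 m1 m2 : lsubmx (0 : 'rV[R]_(m1 + m2)) = 0.
Proof. by apply/matrixP => i j; rewrite !mxE. Qed.
Lemma rsub0 m1 m2 : rsubmx (0 : 'rV[R]_(m1 + m2)) = 0.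
Proof. by apply/matrixP => i j; rewrite !mxE. Qed.

Lemma transv0 m (P Q : 'M[R]_m) (x : 'rV[R]_m) :
  transverse P Q -> (x <= P)%MS -> (x <= Q)%MS -> x = 0.
Proof.
rewrite /transverse => /eqP; rewrite mxrank_eq0 => /eqP c0 xP xQ.
have : (x <= P :&: Q)%MS by rewrite sub_capmx xP xQ.
by rewrite c0 submx0 => /eqP.
Qed.

Lemma subN m k (x : 'rV[R]_m) (P : 'M[R]_(k, m)) : (x <= P)%MS -> (- x <= P)%MS.
Proof. by move=> h; rewrite -scaleN1r scalemx_sub. Qed.

End Blocks.

Section Maslov.
Variable R : realType.
Variable n : nat.
Variable Om : 'M[R]_(n + n).
Local Notation m := (n + n).

Definition E1 : 'M[R]_(m + (m + m), m) := col_mx 1%:M 0.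
Definition E2 : 'M[R]_(m + (m + m), m) := col_mx 0 (col_mx 1%:M 0).
Definition E3 : 'M[R]_(m + (m + m), m) := col_mx 0 (col_mx 0 1%:M).

Lemma E1E (w : 'rV[R]_(m + (m + m))) : w *m E1 = lsubmx w.
Proof. by rewrite -{1}(hsubmxK w) mul_row_col mulmx1 mulmx0 addr0. Qed.
Lemma E2E (w : 'rV[R]_(m + (m + m))) : w *m E2 = lsubmx (rsubmx w).
Proof.
rewrite -{1}(hsubmxK w) mul_row_col mulmx0 add0r.
by rewrite -{1}(hsubmxK (rsubmx w)) mul_row_col mulmx1 mulmx0 addr0.
Qed.
Lemma E3E (w : 'rV[R]_(m + (m + m))) : w *m E3 = rsubmx (rsubmx w).
Proof.
rewrite -{1}(hsubmxK w) mul_row_col mulmx0 add0r.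
by rewrite -{1}(hsubmxK (rsubmx w)) mul_row_col mulmx1 mulmx0 add0r.
Qed.

Definition Smas : 'M[R]_(m + (m + m)) :=
  E1 *m Om *m E2^T + E2 *m Om *m E3^T + E3 *m Om *m E1^T.

Lemma tripleE (w w' : 'rV[R]_(m + (m + m))) (A B : 'M[R]_(m + (m + m), m)) :
  (w *m (A *m Om *m B^T) *m w'^T) 0 0 = omega Om (w *m A) (w' *m B).
Proof. by rewrite /omega trmx_mul !mulmxA. Qed.

Lemma mas_bil (w w' : 'rV[R]_(m + (m + m))) :
  (w *m Smas *m w'^T) 0 0 = omega Om (w *m E1) (w' *m E2)
    + omega Om (w *m E2) (w' *m E3) + omega Om (w *m E3) (w' *m E1).
Proof.
have ae : forall (A B : 'M[R]_1), (A + B) 0 0 = A 0 0 + B 0 0 by move=> A B; rewrite mxE.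
by rewrite /Smas !mulmxDr !mulmxDl !ae !tripleE.
Qed.

Lemma maslov_qf : maslov_form Om = qf Smas.
Proof. by apply/funext => w; rewrite /qf mas_bil /maslov_form E1E E2E E3E. Qed.

Lemma omega0r x : omega Om x 0 = 0.
Proof. by rewrite /omega trmx0 mulmx0 mxE. Qed.
Lemma omega0l x : omega Om 0 x = 0.
Proof. by rewrite /omega !mul0mx mxE. Qed.
Lemma omegaBr x y z : omega Om x (y - z) = omega Om x y - omega Om x z.
Proof.
have ae : forall (A B : 'M[R]_1), (A - B) 0 0 = A 0 0 - B 0 0 by move=> A B; rewrite !mxE.
by rewrite /omega linearB /= mulmxBr ae.
Qed.
Lemma omegaC x y : Om^T = - Om -> omega Om x y = - omega Om y x.
Proof.
have ae : forall (A : 'M[R]_1), (- A) 0 0 = - A 0 0 by move=> A; rewrite !mxE.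
by move=> OT; rewrite /omega trE OT mulmxN mulNmx ae.
Qed.

Lemma lag_max (L : 'M[R]_m) (u : 'rV[R]_m) :
  symplectic_form Om -> lagproj Om L ->
  (forall y : 'rV[R]_m, (y <= L)%MS -> omega Om y u = 0) -> (u <= L)%MS.
Proof.
move=> [OT Ou] [LT LL rL LO] H.
set K := kermx ((L *m Om)^T).
have uK : (u <= K)%MS.
  apply/sub_kermxP; apply: trmx_inj; rewrite trmx_mul trmxK trmx0.
  apply/matrixP => i j; rewrite ord1 [RHS]mxE.
  transitivity ((row i (L *m Om *m u^T)) 0 0); first by rewrite [RHS]mxE.
  by rewrite !row_mul; exact: H (row i L) (row_sub i L).
have LK : (L <= K)%MS.
  by apply/sub_kermxP; rewrite trmx_mul OT mulNmx mulmxN mulmxA LO oppr0.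
have rK : \rank K = \rank L.
  rewrite /K mxrank_ker mxrank_tr mxrankMfree ?row_free_unit // rL; lia.
have := mxrank_leqif_sup LK; move=> [_]; rewrite rK eqxx => /esym KL.
exact: submx_trans uK KL.
Qed.

Lemma nondeg_mas (L1 L2 L3 : 'M[R]_m) :
  symplectic_form Om -> lagproj Om L1 -> lagproj Om L2 -> lagproj Om L3 ->
  transverse L1 L2 -> transverse L2 L3 -> transverse L1 L3 ->
  nondeg Smas (block_mx L1 0 0 (block_mx L2 0 0 L3)).
Proof.
move=> Sy l1 l2 l3 t12 t23 t13 w wW H.
have OT : Om^T = - Om by case: Sy.
have [x1L /sub_blkW [x2L x3L]] := sub_blkW wW.
set x1 := lsubmx w in x1L *; set x2 := lsubmx (rsubmx w) in x2L *;
set x3 := rsubmx (rsubmx w) in x3L *.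
have bfw : forall w', (w' <= block_mx L1 0 0 (block_mx L2 0 0 L3))%MS ->
   omega Om x1 (w' *m E2) + omega Om x2 (w' *m E3) + omega Om x3 (w' *m E1)
 + (omega Om (w' *m E1) x2 + omega Om (w' *m E2) x3 + omega Om (w' *m E3) x1) = 0.
  move=> w' w'W; have := H w' w'W; rewrite bfE !mas_bil E1E E2E E3E.
  by rewrite -/x1 -/x2 -/x3 !E1E !E2E !E3E.
have c1 : (x2 - x3 <= L1)%MS.
  apply: (lag_max Sy l1) => y yL.
  have := bfw (row_mx y 0) (sub_blk yL (sub0mx _ _)).
  rewrite !E1E !E2E !E3E row_mxKl row_mxKr lsub0 rsub0 !omega0r !omega0l.
  by rewrite omegaBr (omegaC x3 y OT); move=> h; rewrite -h; ring.
have c2 : (x3 - x1 <= L2)%MS.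
  apply: (lag_max Sy l2) => y yL.
  have := bfw (row_mx 0 (row_mx y 0)) (sub_blk (sub0mx _ _) (sub_blk yL (sub0mx _ _))).
  rewrite !E1E !E2E !E3E row_mxKl row_mxKr row_mxKl row_mxKr !omega0r !omega0l.
  by rewrite omegaBr (omegaC x1 y OT); move=> h; rewrite -h; ring.
have c3 : (x1 - x2 <= L3)%MS.
  apply: (lag_max Sy l3) => y yL.
  have := bfw (row_mx 0 (row_mx 0 y)) (sub_blk (sub0mx _ _) (sub_blk (sub0mx _ _) yL)).
  rewrite !E1E !E2E !E3E row_mxKl row_mxKr row_mxKl row_mxKr !omega0r !omega0l.
  by rewrite omegaBr (omegaC x2 y OT); move=> h; rewrite -h; ring.
have u0 : x1 - x2 + x3 = 0.
  apply: (transv0 t13).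
    have -> : x1 - x2 + x3 = x1 - (x2 - x3) by apply/matrixP => i j; rewrite !mxE; ring.
    by apply: addmx_sub => //; apply: subN.
  by apply: addmx_sub.
have v0 : x2 + x3 - x1 = 0.
  apply: (transv0 t23).
    have -> : x2 + x3 - x1 = x2 + (x3 - x1) by apply/matrixP => i j; rewrite !mxE; ring.
    by apply: addmx_sub.
  have -> : x2 + x3 - x1 = x3 - (x1 - x2) by apply/matrixP => i j; rewrite !mxE; ring.
  by apply: addmx_sub => //; apply: subN.
have e3 : x3 = 0.
  apply/matrixP => i j; have /matrixP /(_ i j) := u0; have /matrixP /(_ i j) := v0.
  rewrite !mxE => a b; lra.
have e2 : x2 = 0.
  apply: (transv0 t12) => //; move: c1; rewrite e3 subr0 //.
have e1 : x1 = 0.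
  by move: u0; rewrite e2 e3 subr0 addr0.
by rewrite -(hsubmxK w) -(hsubmxK (rsubmx w)) -/x1 -/x2 -/x3 e1 e2 e3 !row_mx0.
Qed.

End Maslov.
Section BlockSum.
Variable R : realType.

Lemma msum_blk m1 m2 (A : 'M[R]_m1) (B : 'M[R]_m2) :
  msum (block_mx A 0 0 B) = msum A + msum B.
Proof.
rewrite /msum big_split_ord /=; congr (_ + _).
  apply: eq_bigr => i _; rewrite big_split_ord /=.
  rewrite (eq_bigr (fun j => `|A i j|)); last by move=> j _; rewrite block_mxEul.
  rewrite [X in _ + X]big1 ?addr0 // => j _; by rewrite block_mxEur mxE normr0.
apply: eq_bigr => i _; rewrite big_split_ord /=.
rewrite [X in X + _]big1 ?add0r; last by move=> j _; rewrite block_mxEdl mxE normr0.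
by apply: eq_bigr => j _; rewrite block_mxEdr.
Qed.

Lemma blk_sub m1 m2 (A A' : 'M[R]_m1) (B B' : 'M[R]_m2) :
  block_mx A 0 0 B - block_mx A' 0 0 B' = block_mx (A - A') 0 0 (B - B').
Proof. by rewrite opp_block_mx add_block_mx !oppr0 !addr0. Qed.

Lemma blk_mulmx m1 m2 (A A' : 'M[R]_m1) (B B' : 'M[R]_m2) :
  block_mx A 0 0 B *m block_mx A' 0 0 B' = block_mx (A *m A') 0 0 (B *m B').
Proof. by rewrite mulmx_block !mulmx0 !mul0mx !addr0 !add0r. Qed.

Lemma mxdist_msum m (P Q : 'M[R]_m) : mxdist P Q = msum (P - Q).
Proof. by rewrite /mxdist /msum; apply: eq_bigr => i _; apply: eq_bigr => j _; rewrite !mxE. Qed.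

End BlockSum.

Lemma betan_locconst (R : realType) (n : nat) (Om : 'M[R]_(n + n))
  (L1 L2 L3 : 'M[R]_(n + n)) :
  symplectic_form Om -> lagproj Om L1 -> lagproj Om L2 -> lagproj Om L3 ->
  transverse L1 L2 -> transverse L2 L3 -> transverse L1 L3 ->
  exists2 d : R, 0 < d & forall P1 P2 P3 : 'M[R]_(n + n),
    lagproj Om P1 -> lagproj Om P2 -> lagproj Om P3 ->
    mxdist P1 L1 < d -> mxdist P2 L2 < d -> mxdist P3 L3 < d ->
    betan Om P1 P2 P3 = betan Om L1 L2 L3.
Proof.
move=> Sy l1 l2 l3 t12 t23 t13.
set W := block_mx L1 0 0 (block_mx L2 0 0 L3).
have WW : W *m W = W.
  by rewrite /W !blk_mulmx; case: l1 => _ -> _ _; case: l2 => _ -> _ _; case: l3 => _ -> _ _.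
have nd := nondeg_mas Sy l1 l2 l3 t12 t23 t13.
have [d0 d00 hd] := signature_locconst WW nd.
exists (d0 / 3); first by apply: divr_gt0.
move=> P1 P2 P3 p1 p2 p3 h1 h2 h3.
rewrite /betan maslov_qf; apply: hd.
  rewrite /W !blk_sub !msum_blk -!mxdist_msum.
  have -> : d0 = d0 / 3 + d0 / 3 + d0 / 3 by field.
  by rewrite addrA; apply: ltrD => //; apply: ltrD.
rewrite /W !rank_diag_block_mx.
by case: p1 => _ _ -> _; case: p2 => _ _ -> _; case: p3 => _ _ -> _;
   case: l1 => _ _ -> _; case: l2 => _ _ -> _; case: l3 => _ _ -> _.
Qed.
Section Beta1.
Variable R : realType.
Implicit Types a b x y t : R.

Lemma pt_eq a b : pt a = pt b <-> cos a = cos b /\ sin a = sin b.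
Proof. by rewrite /pt; split => [[-> ->]|[-> ->]]. Qed.

Lemma trig_int a (k : int) :
  sin (a + 2 * pi * k%:~R) = sin a /\ cos (a + 2 * pi * k%:~R) = cos a.
Proof.
case: k => j.
  have -> : 2 * pi * (Posz j)%:~R = (pi *+ 2) *+ j :> R.
    by rewrite -[X in _ = X]mulr_natr -pmulrn; ring.
  by rewrite (periodicn (@sinD2pi R)) (periodicn (@cosD2pi R)).
set b := a + 2 * pi * (Negz j)%:~R.
have -> : a = b + (pi *+ 2) *+ j.+1.
  by rewrite /b NegzE mulrNz -[X in _ = _ + X]mulr_natr -pmulrn; ring.
by rewrite (periodicn (@sinD2pi R)) (periodicn (@cosD2pi R)) -/b.
Qed.

Lemma angmodE x : x = angmod x + 2 * pi * (Num.floor (x / (2 * pi)))%:~R.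
Proof. by rewrite /angmod subrK. Qed.

Lemma angmod_trig x : sin (angmod x) = sin x /\ cos (angmod x) = cos x.
Proof.
have [h1 h2] := trig_int (angmod x) (Num.floor (x / (2 * pi))).
by rewrite -angmodE in h1 h2; rewrite h1 h2.
Qed.

Lemma angmod_itv x : 0 <= angmod x < 2 * pi.
Proof.
have p0 : 0 < 2 * pi :> R by rewrite pmulr_rgt0 // pi_gt0.
have h1 := floor_le (x / (2 * pi)); have h2 := floorD1_gt (x / (2 * pi)).
set k := Num.floor _ in h1 h2 *; rewrite /angmod -/k.
rewrite intrD in h2.
apply/andP; split.
  by rewrite subr_ge0 mulrC -ler_pdivlMr.
have h3 : x < (k%:~R + 1) * (2 * pi) by rewrite -ltr_pdivrMr.
rewrite -subr_gt0.
have -> : 2 * pi - (x - 2 * pi * k%:~R) = (k%:~R + 1) * (2 * pi) - x by ring.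
by rewrite subr_gt0.
Qed.

Definition Dt t1 t2 t3 : R := sin (t2 - t1) + sin (t3 - t2) + sin (t1 - t3).

Lemma half_id x y :
  sin (x + x) - sin (y + y) + sin ((y + y) - (x + x)) = 4 * sin x * sin y * sin (y - x).
Proof.
rewrite !sinB !sinD !cosD.
have hx := cos2Dsin2 x; have hy := cos2Dsin2 y.
apply/eqP; rewrite -subr_eq0; apply/eqP.
transitivity (2 * sin x * cos x * (1 - (cos y ^+ 2 + sin y ^+ 2))
  - 2 * sin y * cos y * (1 - (cos x ^+ 2 + sin x ^+ 2))); first ring.
by rewrite hx hy subrr !mulr0 subrr.
Qed.

Lemma beta1_D t1 t2 t3 : pt t1 <> pt t2 -> pt t2 <> pt t3 -> pt t1 <> pt t3 ->
  Dt t1 t2 t3 != 0 /\ beta1 t1 t2 t3 = if 0 < Dt t1 t2 t3 then 1 else -1.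
Proof.
move=> d12 d23 d13.
have p0 : 0 < pi := pi_gt0 R.
set al := angmod (t2 - t1); set ga := angmod (t3 - t1).
have [sa ca] := angmod_trig (t2 - t1); have [sg cg] := angmod_trig (t3 - t1).
rewrite -/al in sa ca; rewrite -/ga in sg cg.
have /andP [a0 a1] := angmod_itv (t2 - t1); have /andP [g0 g1] := angmod_itv (t3 - t1).
rewrite -/al in a0 a1; rewrite -/ga in g0 g1.
have e2 : t2 = t1 + (t2 - t1) by rewrite addrC subrK.
have e3 : t3 = t1 + (t3 - t1) by rewrite addrC subrK.
have anz : al != 0.
  apply/eqP => a00; apply: d12; apply/pt_eq.
  move: sa ca; rewrite a00 sin0 cos0 => sa ca.
  by rewrite e2 sinD cosD -sa -ca; split; ring.
have gnz : ga != 0.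
  apply/eqP => g00; apply: d13; apply/pt_eq.
  move: sg cg; rewrite g00 sin0 cos0 => sg cg.
  by rewrite e3 sinD cosD -sg -cg; split; ring.
have agnz : al != ga.
  apply/eqP => ag; apply: d23; apply/pt_eq.
  rewrite e2 e3 (sinD t1 (t2 - t1)) (cosD t1 (t2 - t1)) (sinD t1 (t3 - t1)) (cosD t1 (t3 - t1)) -sa -ca -sg -cg ag; split; ring.
have DE : Dt t1 t2 t3 = sin al - sin ga + sin (ga - al).
  rewrite /Dt.
  have -> : t3 - t2 = (t3 - t1) - (t2 - t1) by ring.
  have -> : t1 - t3 = - (t3 - t1) by ring.
  by rewrite sinN (sinB (t3 - t1) (t2 - t1)) (sinB ga al) sa ca sg cg; ring.
set x := al / 2; set y := ga / 2.
have ex : al = x + x by rewrite /x -splitr.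
have ey : ga = y + y by rewrite /y -splitr.
have DE2 : Dt t1 t2 t3 = 4 * sin x * sin y * sin (y - x).
  by rewrite DE ex ey half_id.
have sx : 0 < sin x.
  apply: sin_gt0_pi; rewrite /x; apply/andP; split.
    by rewrite divr_gt0 // lt_def anz a0.
  by rewrite ltr_pdivrMr // mulrC.
have sy : 0 < sin y.
  apply: sin_gt0_pi; rewrite /y; apply/andP; split.
    by rewrite divr_gt0 // lt_def gnz g0.
  by rewrite ltr_pdivrMr // mulrC.
have Hb : beta1 t1 t2 t3 = if al < ga then 1 else -1.
  rewrite /beta1; have -> : [&& pt t1 != pt t2, pt t2 != pt t3 & pt t1 != pt t3].
    by apply/and3P; split; apply/eqP.
  by [].
have [lt|gt] := boolP (al < ga).
  have syx : 0 < sin (y - x).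
    apply: sin_gt0_pi; rewrite /x /y; apply/andP; split.
      by rewrite subr_gt0 ltr_pM2r.
    have h : ga / 2 - al / 2 <= ga / 2 by rewrite gerBl divr_ge0.
    by apply: (le_lt_trans h); rewrite ltr_pdivrMr // mulrC.
  have Dp : 0 < Dt t1 t2 t3.
    by rewrite DE2; apply: mulr_gt0 => //; apply: mulr_gt0 => //; apply: mulr_gt0.
  by rewrite Dp Hb lt; split => //; rewrite gt_eqF.
have lt : ga < al by rewrite lt_def agnz /= leNgt.
have syx : sin (y - x) < 0.
  have -> : y - x = - (x - y) by ring.
  rewrite sinN oppr_lt0; apply: sin_gt0_pi; rewrite /x /y; apply/andP; split.
    by rewrite subr_gt0 ltr_pM2r.
  have h : al / 2 - ga / 2 <= al / 2 by rewrite gerBl divr_ge0.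
  by apply: (le_lt_trans h); rewrite ltr_pdivrMr // mulrC.
have Dn : Dt t1 t2 t3 < 0.
  by rewrite DE2 pmulr_rlt0 //; apply: mulr_gt0 => //; apply: mulr_gt0.
rewrite Hb (negbTE gt) ltNge (ltW Dn) /=; split => //; by rewrite lt_eqF.
Qed.

End Beta1.
Section Close.
Variable R : realType.
Implicit Types a b t : R.

Lemma cdist2E t t0 : cdist2 (pt t) (pt t0) = (cos t - cos t0) ^+ 2 + (sin t - sin t0) ^+ 2.
Proof. by []. Qed.

Lemma DtE t1 t2 t3 : Dt t1 t2 t3 =
  (sin t2 * cos t1 - cos t2 * sin t1) + (sin t3 * cos t2 - cos t3 * sin t2)
  + (sin t1 * cos t3 - cos t1 * sin t3).
Proof. by rewrite /Dt !sinB. Qed.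

Lemma Dt_degen t1 t2 t3 :
  pt t1 = pt t2 \/ pt t2 = pt t3 \/ pt t1 = pt t3 -> Dt t1 t2 t3 = 0.
Proof.
rewrite DtE; case=> [/pt_eq [c s]|[/pt_eq [c s]|/pt_eq [c s]]]; rewrite ?c ?s; ring.
Qed.

Lemma prod_close (a a' b b' e : R) : `|a' - a| <= e -> `|b' - b| <= e ->
  `|a| <= 1 -> `|b'| <= 1 -> `|a' * b' - a * b| <= e *+ 2.
Proof.
move=> ha hb a1 b1.
have -> : a' * b' - a * b = (a' - a) * b' + a * (b' - b) by ring.
apply: le_trans (ler_normD _ _) _; rewrite mulr2n !normrM.
apply: lerD.
  by rewrite -[X in _ <= X]mulr1; apply: ler_pM.
by rewrite -[X in _ <= X]mul1r; apply: ler_pM.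
Qed.

Lemma sin_close (a a' b b' e : R) :
  `|cos a' - cos a| <= e -> `|sin a' - sin a| <= e ->
  `|cos b' - cos b| <= e -> `|sin b' - sin b| <= e ->
  `|sin (b' - a') - sin (b - a)| <= e *+ 4.
Proof.
move=> ca sa cb sb; rewrite !sinB.
have -> : sin b' * cos a' - cos b' * sin a' - (sin b * cos a - cos b * sin a)
  = (sin b' * cos a' - sin b * cos a) - (cos b' * sin a' - cos b * sin a) by ring.
apply: le_trans (ler_normB _ _) _.
have -> : e *+ 4 = e *+ 2 + e *+ 2 by rewrite -mulrnDr.
by apply: lerD; apply: prod_close => //; solve [exact: sin_max | exact: cos_max].
Qed.

Lemma Dt_close t1 t2 t3 s1 s2 s3 e :
  `|cos s1 - cos t1| <= e -> `|sin s1 - sin t1| <= e ->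
  `|cos s2 - cos t2| <= e -> `|sin s2 - sin t2| <= e ->
  `|cos s3 - cos t3| <= e -> `|sin s3 - sin t3| <= e ->
  `|Dt s1 s2 s3 - Dt t1 t2 t3| <= e *+ 12.
Proof.
move=> c1 z1 c2 z2 c3 z3; rewrite /Dt.
have -> : sin (s2 - s1) + sin (s3 - s2) + sin (s1 - s3) -
          (sin (t2 - t1) + sin (t3 - t2) + sin (t1 - t3)) =
   (sin (s2 - s1) - sin (t2 - t1)) + (sin (s3 - s2) - sin (t3 - t2))
   + (sin (s1 - s3) - sin (t1 - t3)) by ring.
have -> : e *+ 12 = e *+ 4 + e *+ 4 + e *+ 4 by rewrite -!mulrnDr.
apply: le_trans (ler_normD _ _) _; apply: lerD; last exact: sin_close.
apply: le_trans (ler_normD _ _) _; apply: lerD; exact: sin_close.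
Qed.

Lemma sq_lt (d e : R) : 0 < e -> d ^+ 2 < e ^+ 2 -> `|d| < e.
Proof.
move=> e0 h; rewrite ltNge; apply/negP => h2.
have := ler_pM (ltW e0) (ltW e0) h2 h2.
by rewrite -!expr2 real_normK ?num_real // leNgt h.
Qed.

Lemma cdist_close t t0 e : 0 < e -> cdist2 (pt t) (pt t0) < e ^+ 2 ->
  `|cos t - cos t0| <= e /\ `|sin t - sin t0| <= e.
Proof.
move=> e0; rewrite cdist2E => h.
have a := sqr_ge0 (cos t - cos t0); have b := sqr_ge0 (sin t - sin t0).
split; apply: ltW; apply: sq_lt => //.
  by apply: le_lt_trans h; rewrite lerDl.
by apply: le_lt_trans h; rewrite lerDr.
Qed.

End Close.
Section Meas.
Variable R : realType.

Lemma meas_lt (f : R -> R) (e : R) : measurable_fun setT f ->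
  measurable [set t | f t < e].
Proof.
move=> mf; have := mf measurableT _ (measurable_itv `]-oo, e[%R).
rewrite setTI; congr measurable; apply/seteqP; split => x /=;
  by rewrite in_itv /=.
Qed.

Lemma meas_cd (t0 : R) : measurable_fun setT (fun t : R => cdist2 (pt t) (pt t0)).
Proof.
rewrite (_ : (fun t : R => cdist2 (pt t) (pt t0)) =
   (fun t => (cos t - cos t0) ^+ 2 + (sin t - sin t0) ^+ 2)); last first.
  by apply/funext => t; rewrite cdist2E.
apply: measurable_funD; apply: measurable_funX; apply: measurable_funB => //;
  apply: continuous_measurable_fun; [exact: continuous_cos | exact: continuous_sin].
Qed.

Lemma meas_md (m : nat) (phi : R -> 'M[R]_m) (L : 'M[R]_m) :
  measurable_lagmap phi -> measurable_fun setT (fun t => mxdist (phi t) L).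
Proof.
move=> mp; rewrite /mxdist; apply: measurable_sum => i; apply: measurable_sum => j.
apply: measurableT_comp; first exact: normr_measurable.
by apply: measurable_funB => //; exact: mp.
Qed.

Lemma find_triple (m : nat) (phi : R -> 'M[R]_m) (Nset : set ((R * R) * R))
  (t1 t2 t3 : R) (L1 L2 L3 : 'M[R]_m) (e : R) :
  measurable_lagmap phi ->
  (((lam R \x lam R) \x lam R)%E).-negligible Nset ->
  in_essgraph phi t1 L1 -> in_essgraph phi t2 L2 -> in_essgraph phi t3 L3 ->
  0 < e ->
  exists s1 s2 s3 : R, [/\ ~ Nset ((s1, s2), s3),
    (cdist2 (pt s1) (pt t1) < e /\ mxdist (phi s1) L1 < e),
    (cdist2 (pt s2) (pt t2) < e /\ mxdist (phi s2) L2 < e) &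
    (cdist2 (pt s3) (pt t3) < e /\ mxdist (phi s3) L3 < e)].
Proof.
move=> mp [M [mM M0 NM]] g1 g2 g3 e0.
pose S (t0 : R) (L : 'M[R]_m) :=
  [set t | cdist2 (pt t) (pt t0) < e /\ mxdist (phi t) L < e].
have mS : forall t0 L, measurable (S t0 L).
  move=> t0 L; rewrite (_ : S t0 L = [set t | cdist2 (pt t) (pt t0) < e] `&`
                                [set t | mxdist (phi t) L < e]) //.
  apply: measurableI; apply: meas_lt; [exact: meas_cd | exact: meas_md].
have mP : measurable ((S t1 L1 `*` S t2 L2) `*` S t3 L3).
  by apply: measurableX => //; apply: measurableX.
have Ppos : (0 < ((lam R \x lam R) \x lam R) ((S t1 L1 `*` S t2 L2) `*` S t3 L3))%E.
  have mP12 : measurable (S t1 L1 `*` S t2 L2) by apply: measurableX.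
  rewrite /lam (product_measure1E (@lebesgue_measure R \x @lebesgue_measure R)%E
     (@lebesgue_measure R) mP12 (mS t3 L3)).
  have E12 := product_measure1E (@lebesgue_measure R) (@lebesgue_measure R) (mS t1 L1) (mS t2 L2).
  have h : (0 < @lebesgue_measure R (S t1 L1) * @lebesgue_measure R (S t2 L2))%E.
    by apply: mule_gt0; [exact: g1 | exact: g2].
  rewrite -E12 in h.
  apply: mule_gt0; [exact: h | exact: g3].
have [p [Pp nM]] : exists p, ((S t1 L1 `*` S t2 L2) `*` S t3 L3) p /\ ~ M p.
  apply: contrapT => H.
  have sub : (S t1 L1 `*` S t2 L2) `*` S t3 L3 `<=` M.
    by move=> p Pp; apply: contrapT => nM; apply: H; exists p.
  have := le_measure ((@lebesgue_measure R \x @lebesgue_measure R) \x @lebesgue_measure R)%E (mem_set mP) (mem_set mM) sub.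
  move=> h; have : (0 < ((lam R \x lam R) \x lam R)%E M)%E := lt_le_trans Ppos h.
  by rewrite M0 ltxx.
case: p Pp nM => [[s1 s2] s3] [[/= P1 P2] P3] nM.
exists s1, s2, s3; split => //.
by move/NM.
Qed.

End Meas.
Lemma sign_stable (R : realType) (a b : R) : `|a - b| < `|b| -> a != 0 /\ (0 < a) = (0 < b).
Proof.
move=> h; have h1 : a - b <= `|a - b| by exact: ler_norm.
have h2 : b - a <= `|a - b| by rewrite distrC; exact: ler_norm.
move: h1 h2 h; set c := `|a - b| => h1 h2 h.
case: (ltrgt0P b) => hb.
- rewrite gtr0_norm // in h; have ha : 0 < a by lra.
  by split; [rewrite (gt_eqF ha) | rewrite ha].
- rewrite ltr0_norm // in h; have ha : a < 0 by lra.
  by split; [rewrite (lt_eqF ha) | rewrite ltNge (ltW ha)].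
- by move: h; rewrite hb normr0 ltNge normr_ge0.
Qed.

Unset Implicit Arguments.

Theorem lemma8p3 (R : realType) (n : nat) (Om : 'M[R]_(n + n))
  (G : set 'M[R[i]]_2) (rho : 'M[R[i]]_2 -> 'M[R]_(n + n))
  (phi : R -> 'M[R]_(n + n)) :
  symplectic_form Om ->
  torsionfree_cocompact_lattice_PU11 G ->
  (* rho : Gamma -> Sp(V) homomorphism (factoring through G/{+-1}) *)
  (forall g, G g -> Sp Om (rho g)) ->
  (forall g h, G g -> G h -> rho (g * h) = rho g *m rho h) ->
  (forall g, G g -> rho (- g) = rho g) ->
  (* phi : S^1 -> L(V) measurable *)
  (forall t, phi (t + 2 * pi) = phi t) ->
  (forall t, lagproj Om (phi t)) ->
  measurable_lagmap phi ->
  (* rho-equivariance (almost everywhere, for each gamma) *)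
  (forall g, G g -> (lam R).-negligible
     [set t | ~ (forall t', pt t' = mob g (pt t) ->
                   (phi t' == phi t *m (rho g)^T)%MS)]) ->
  (* (i) *)
  (((lam R \x lam R) \x lam R)%E).-negligible
     [set t | betan Om (phi t.1.1) (phi t.1.2) (phi t.2)
              <> n%:Z * beta1 t.1.1 t.1.2 t.2] ->
  (* (ii) *)
  (forall L, lagproj Om L ->
     (lam R).-negligible [set t | \rank (phi t :&: L)%MS <> 0%N]) ->
  forall (t1 t2 t3 : R) (L1 L2 L3 : 'M[R]_(n + n)),
    lagproj Om L1 -> lagproj Om L2 -> lagproj Om L3 ->
    in_essgraph phi t1 L1 -> in_essgraph phi t2 L2 -> in_essgraph phi t3 L3 ->
    pt t1 <> pt t2 -> pt t2 <> pt t3 -> pt t1 <> pt t3 ->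
    transverse L1 L2 -> transverse L2 L3 -> transverse L1 L3 ->
    betan Om L1 L2 L3 = n%:Z * beta1 t1 t2 t3.
Proof.
move=> Sy _ _ _ _ _ lagphi mphi _ Hi _ t1 t2 t3 L1 L2 L3 l1 l2 l3 g1 g2 g3
  d12 d23 d13 t12 t23 t13.
have [d d0 hd] := betan_locconst Sy l1 l2 l3 t12 t23 t13.
have [Dnz Hb] := beta1_D d12 d23 d13.
set D := Dt t1 t2 t3 in Dnz Hb.
set ep := `|D| / 13.
have ep0 : 0 < ep by rewrite divr_gt0 // normr_gt0.
set e := Num.min d (ep ^+ 2).
have e0 : 0 < e by rewrite lt_min d0 exprn_gt0.
have [s1 [s2 [s3 [nN [c1 m1] [c2 m2] [c3 m3]]]]] := find_triple mphi Hi g1 g2 g3 e0.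
have ed : e <= d by rewrite ge_min lexx.
have ee : e <= ep ^+ 2 by rewrite ge_min lexx orbT.
have Hs : betan Om (phi s1) (phi s2) (phi s3) = n%:Z * beta1 s1 s2 s3.
  by apply: contrapT.
have [cc1 ss1] := cdist_close ep0 (lt_le_trans c1 ee).
have [cc2 ss2] := cdist_close ep0 (lt_le_trans c2 ee).
have [cc3 ss3] := cdist_close ep0 (lt_le_trans c3 ee).
have Dc := Dt_close cc1 ss1 cc2 ss2 cc3 ss3.
have lt : `|Dt s1 s2 s3 - D| < `|D|.
  apply: le_lt_trans Dc _; rewrite /ep -mulr_natr.
  have nD : 0 < `|D| by rewrite normr_gt0.
  lra.
have [snz ssign] := sign_stable lt.
have ds12 : pt s1 <> pt s2.
  by move=> E; move/eqP: snz; apply; apply: Dt_degen; left.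
have ds23 : pt s2 <> pt s3.
  by move=> E; move/eqP: snz; apply; apply: Dt_degen; right; left.
have ds13 : pt s1 <> pt s3.
  by move=> E; move/eqP: snz; apply; apply: Dt_degen; right; right.
have [_ Hbs] := beta1_D ds12 ds23 ds13.
rewrite -(hd (phi s1) (phi s2) (phi s3)) ?lagphi //;
  try by apply: lt_le_trans ed.
by rewrite Hs Hbs Hb ssign.
Qed.
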